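(* Let $\mathcal{D}$ be an arbitrary distribution on polygonal curves of complexity $m$ whose vertices lie in the unit Euclidean ball $B_2^d$. Let $P=\{\sigma_1,\dots,\sigma_n\}$ be an i.i.d. sample from $\mathcal{D}$ of size $n$. Then the Rademacher and Gaussian complexities for learning the median curve of complexity $m$ under DTW satisfy $\mathcal{R}(P),\mathcal{G}(P)\in\Omega\!\left(\sqrt{m^2/n}\right)$.
   Context: For curves $\sigma=(v_1,\dots,v_{m'})$, $\tau=(w_1,\dots,w_{m''})$, a traversal $T$ is a sequence of index pairs starting with $(1,1)$, ending with $(m',m'')$, each $(i,j)$ followed only by $(i+1,j)$, $(i,j+1)$ or $(i+1,j+1)$; $d_{DTW}(\sigma,\tau)=\min_T\sum_{(i,j)\in T}\|v_i-w_j\|$. Candidate median curves $\psi$ range over curves of complexity $m$ with vertices in $B_2^d$. With independent Rademacher variables $r_i$ and independent standard Gaussians $g_i$, $\mathcal{R}(P)=\mathbb{E}\sup_\psi\left|\frac1n\sum_{i=1}^n d_{DTW}(\sigma_i,\psi)r_i\right|$ and $\mathcal{G}(P)=\mathbb{E}\sup_\psi\left|\frac1n\sum_{i=1}^n d_{DTW}(\sigma_i,\psi)g_i\right|$. *)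

(* Defs.v *)
From HB Require Import structures.
From mathcomp Require Import all_boot all_order all_algebra.
From mathcomp Require Import all_classical all_reals all_analysis.
Set Implicit Arguments. Unset Strict Implicit. Unset Printing Implicit Defensive.
Import Order.TTheory GRing.Theory Num.Theory.
Local Open Scope classical_set_scope.
Local Open Scope ring_scope.

Section Defs.
Variable R : realType.

Definition enorm (d : nat) (v : 'rV[R]_d) : R :=
  Num.sqrt (\sum_(i < d) (v ord0 i) ^+ 2).

(* A polygonal curve of complexity m in R^d: its sequence of m vertices
   v_1, ..., v_m (indexed 0 .. m-1). *)
Definition curve (d m : nat) := 'I_m -> 'rV[R]_d.

Definition in_unit_ball (d m : nat) (s : curve d m) : Prop :=
  forall k, enorm (s k) <= 1.

Definition trav_step (m1 m2 : nat) (p q : 'I_m1 * 'I_m2) : bool :=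
  [|| (val q.1 == (val p.1).+1) && (val q.2 == val p.2),
      (val q.1 == val p.1) && (val q.2 == (val p.2).+1) |
      (val q.1 == (val p.1).+1) && (val q.2 == (val p.2).+1)].

(* The sequence x :: s of index pairs is a traversal: it starts at the first
   pair (1,1) (0-based: (0,0)), ends at (m1,m2) (0-based: (m1-1,m2-1)), and
   each pair is followed by an admissible successor. *)
Definition is_traversal (m1 m2 : nat) (x : 'I_m1 * 'I_m2) (s : seq ('I_m1 * 'I_m2)) : bool :=
  [&& val x.1 == 0%N, val x.2 == 0%N, path (@trav_step m1 m2) x s,
      val (last x s).1 == m1.-1 & val (last x s).2 == m2.-1].

Definition dtw (d m1 m2 : nat) (s : curve d m1) (t : curve d m2) : R :=
  inf [set c | exists x (T : seq ('I_m1 * 'I_m2)),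
         is_traversal x T /\ c = \sum_(p <- x :: T) enorm (s p.1 - t p.2)].

Definition sup_dev (d m n : nat) (P : 'I_n -> curve d m) (r : 'I_n -> R) : R :=
  sup [set (`| (n%:R)^-1 * \sum_(i < n) dtw (P i) psi * r i |)
        | psi in [set psi : curve d m | in_unit_ball psi]].

Definition rademacher (d m n : nat) (P : 'I_n -> curve d m) : R :=
  (2 ^+ n)^-1 * \sum_(b : {ffun 'I_n -> bool})
                  sup_dev P (fun i => if b i then 1 else -1).

(* Expectation of f(g_0, ..., g_{n-1}) for independent standard Gaussians g_i,
   written as the iterated integral against the standard normal law. *)
Fixpoint gauss_expect (n : nat) (f : (nat -> R) -> R) : R :=
  match n with
  | 0 => f (fun _ => 0)
  | k.+1 => Rintegral (normal_prob 0 1) setT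
              (fun x => gauss_expect k (fun g => f (fun i => if i == k then x else g i)))
  end.

Definition gaussian (d m n : nat) (P : 'I_n -> curve d m) : R :=
  gauss_expect n (fun g => sup_dev P (fun i => g (val i))).

End Defs.

(* Main.v *)
Require Import Defs.
From HB Require Import structures.
From mathcomp Require Import all_boot all_order all_algebra.
From mathcomp Require Import all_classical all_reals all_analysis.
From mathcomp Require Import measurable_realfun.
From mathcomp Require Import ring lra.
Import Order.TTheory GRing.Theory Num.Theory.
Local Open Scope ring_scope.

Module Aux.
Set Implicit Arguments. Unset Strict Implicit. Unset Printing Implicit Defensive.
Local Open Scope classical_set_scope.
Section cov.
Context (R : realType).
Local Open Scope ereal_scope.
Notation mu := (@lebesgue_measure R).
Import HBNNSimple.

Lemma normal_change (f : measurableTypeR R -> \bar R) : (forall x, 0 <= f x) -> measurable_fun setT f ->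
  \int[normal_prob 0%R 1%R]_x f x = \int[mu]_x (f x * (normal_pdf 0%R 1%R x)%:E).
Proof.
move=> f0 mf; set g := fun x : measurableTypeR R => (normal_pdf (0:R) 1 x)%:E.
have mE : measurable [set: measurableTypeR R] by [].
have mg : measurable_fun setT g.
  by apply/measurable_EFinP; exact: measurable_normal_pdf.
have g0 x : 0 <= g x by rewrite lee_fin normal_pdf_ge0.
pose h := nnsfun_approx mE mf.
have -> : \int[normal_prob 0%R 1%R]_(x in setT) f x =
    lim (\int[normal_prob 0%R 1%R]_(x in setT) (EFin \o h n) x @[n --> \oo]).
  have fE x : setT x -> f x = lim ((EFin \o h n) x @[n --> \oo]).
    by move=> Ex; apply/esym/cvg_lim => //; exact: cvg_nnsfun_approx.
  under eq_integral => x /[!inE] /fE -> //.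
  apply: monotone_convergence => //.
  - move=> n; apply/measurable_EFinP; exact: measurable_funPT.
  - by move=> n x Ex //=; rewrite lee_fin.
  - by move=> x Ex a b ab; rewrite lee_fin; exact/lefP/nd_nnsfun_approx.
have -> : \int[mu]_(x in setT) (f x * g x) =
    lim (\int[mu]_(x in setT) ((EFin \o h n) \* g) x @[n --> \oo]).
  have fg x : setT x -> f x * g x = lim (((EFin \o h n) \* g) x @[n --> \oo]).
    by move=> Ex; apply/esym/cvg_lim => //; apply: cvgeZr;
      [by []|exact: cvg_nnsfun_approx].
  under eq_integral => x /[!inE] /fg -> //.
  apply: monotone_convergence => [//| | |].
  - move=> n; apply/emeasurable_funM => //.
    exact/measurable_EFinP.
  - by move=> n x Ex /=; rewrite mule_ge0 ?g0 ?lee_fin.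
  - move=> x Ex a b ab/=; rewrite lee_wpmul2r ?g0// ?lee_fin//. exact/lefP/nd_nnsfun_approx.
suff suf n : \int[mu]_(x in setT) (((EFin \o h n) \* g) x) =
    \int[normal_prob 0%R 1%R]_(x in setT) (EFin \o h n) x.
  by congr (limn _); apply/funext => n; symmetry; exact: suf.
transitivity (\int[normal_prob 0%R 1%R]_(x in setT)
   (\sum_(y \in range (h n)) (y * \1_(h n @^-1` [set y]) x)%:E)); last first.
  by apply: eq_integral => t tE; rewrite /= fimfunE -fsumEFin.
have indich m r : measurable_fun setT (fun x => (r * \1_(h m @^-1` [set r]) x)%:E).
  by apply: (measurable_comp measurableT) => //; exact: measurable_funM.
rewrite ge0_integral_fsum//; last by move=> m y Ey; exact: nnfun_muleindic_ge0.
transitivity (\int[mu]_(x in setT) (\sum_(y \in range (h n))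
    (y * \1_(h n @^-1` [set y]) x)%:E * g x)).
  under [RHS]eq_integral => x xE.
    rewrite -ge0_mule_fsuml => [|y]; last exact: nnfun_muleindic_ge0.
    rewrite fsumEFin // -(fimfunE _ x); over.
  by [].
rewrite ge0_integral_fsum//; last 2 first.
  - move=> y; apply: emeasurable_funM => //.
  - by move=> m y Ey; rewrite mule_ge0 // nnfun_muleindic_ge0.
apply: eq_fsbigr => r rhn.
under [RHS]eq_integral do rewrite EFinM.
rewrite integralZl_indic_nnsfun => //.
under eq_integral do rewrite EFinM -muleA.
rewrite ge0_integralZl//.
- under eq_integral do rewrite muleC.
  rewrite (eq_integral (g \_ (h n @^-1` [set r]))); last first.
    by move=> x xE; rewrite epatch_indic.
  by rewrite -integral_mkcondr integral_indic// setIC setIT.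
- apply: emeasurable_funM => //; exact/measurable_EFinP.
- by move=> t Et; rewrite mule_ge0 ?g0 ?lee_fin.
- by move: rhn; rewrite inE => -[t _ <-]; rewrite lee_fin.
Qed.

Local Close Scope ereal_scope.
Lemma G1 (lam a b : R) : 0 < 1 + 2 * lam * a ^+ 2 ->
  (\int[normal_prob 0%R 1%R]_x (expR (- lam * (b + a * x) ^+ 2))%:E)%E =
  (expR (- lam * b ^+ 2 / (1 + 2 * lam * a ^+ 2)) / Num.sqrt (1 + 2 * lam * a ^+ 2))%:E.
Proof.
set k := 1 + 2 * lam * a ^+ 2 => k0.
have k0' : k != 0 by rewrite gt_eqF.
rewrite normal_change; last first.
- apply/measurable_EFinP; apply: measurableT_comp => //.
  apply: measurable_funM => //; apply: measurable_funX => //.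
  by apply: measurable_funD => //; apply: measurable_funM.
- by move=> x; rewrite lee_fin expR_ge0.
set s := Num.sqrt k^-1.
have s2 : s ^+ 2 = k^-1 by rewrite sqr_sqrtr // invr_ge0 ltW.
have s0 : s != 0 by rewrite sqrtr_eq0 -ltNge invr_gt0.
set m := - (2 * lam * a * b) / k.
set C := expR (- lam * b ^+ 2 / k).
have ps0 : normal_peak s != 0 by rewrite gt_eqF // normal_peak_gt0.
have E y : - lam * (b + a * y) ^+ 2 + - (y - 0) ^+ 2 / (1 ^+ 2 *+ 2) =
  - lam * b ^+ 2 / k + - (y - m) ^+ 2 / (k^-1 *+ 2).
  rewrite /m /k; field; by rewrite -/k.
have -> : (fun x : measurableTypeR R => ((expR (- lam * (b + a * x) ^+ 2))%:E * (normal_pdf 0 1 x)%:E)%E)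
   = (fun x => (normal_peak 1 * C / normal_peak s)%:E * (normal_pdf m s x)%:E)%E.
  apply/funext => x; rewrite -!EFinM; congr EFin.
  rewrite !normal_pdfE ?oner_neq0 //= /normal_fun.
  transitivity (normal_peak 1 * (C * expR (- (x - m) ^+ 2 / (s ^+ 2 *+ 2)))); last first.
    by field.
  rewrite mulrCA; congr (_ * _); rewrite /C -!expRD; congr expR.
  by rewrite s2 E.
rewrite integralZl //; last exact: integrable_normal_pdf.
rewrite integral_normal_pdf mule1; congr EFin.
rewrite /normal_peak s2 /C invrK.
rewrite -mulrnAr sqrtrM ?invr_ge0 ?ltW // expr1n ?mul1r sqrtr1 mul1r -mulrnAr sqrtrM ?invr_ge0 ?ltW // sqrtrV ?ltW //.
have h1 : Num.sqrt (pi *+ 2 : R) != 0 by rewrite gt_eqF // sqrtr_gt0 mulrn_wgt0 // pi_gt0.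
have h2 : Num.sqrt k != 0 by rewrite gt_eqF // sqrtr_gt0.
by field; rewrite h1 h2.
Qed.
End cov.

Section gauss.
Context (R : realType).
Notation N := (@normal_prob R 0%R 1%R).

Lemma int_mono_nn (f h : measurableTypeR R -> \bar R) :
  (forall x, (0 <= f x)%E) -> (forall x, (f x <= h x)%E) ->
  (\int[N]_x f x <= \int[N]_x h x)%E.
Proof.
move=> f0 fh; rewrite !ge0_integralTE //; last by move=> x; exact: le_trans (f0 x) (fh x).
apply: ereal_sup_le => _ [s Hs <-]; exists s => //= x.
exact: le_trans (Hs x) (fh x).
Qed.

Definition ex (lam a b : R) (x : R) := expR (- lam * (b + a * x) ^+ 2).

Lemma ex_int lam a b : 0 < 1 + 2 * lam * a ^+ 2 ->
  N.-integrable setT (EFin \o ex lam a b).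
Proof.
move=> k0; apply/integrableP; split.
- apply/measurable_EFinP; apply: measurableT_comp => //.
  apply: measurable_funM => //; apply: measurable_funX => //.
  by apply: measurable_funD => //; apply: measurable_funM.
- under eq_integral do rewrite /= ger0_norm ?expR_ge0 //.
  by rewrite G1 // ltry.
Qed.

Lemma Rint_lin al be lam a b : 0 < 1 + 2 * lam * a ^+ 2 ->
  Rintegral N setT (fun x => al + be * ex lam a b x) =
  al + be * (expR (- lam * b ^+ 2 / (1 + 2 * lam * a ^+ 2)) / Num.sqrt (1 + 2 * lam * a ^+ 2)).
Proof.
move=> k0; rewrite RintegralD //; last 2 first.
- exact: finite_measure_integrable_cst.
- have H := integrableZl measurableT be (ex_int b k0); exact: H.
rewrite Rintegral_cst //.
rewrite [X in fine X](probability_setT (normal_prob (0:R) 1)) /=.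
rewrite /= mulr1.
rewrite RintegralZl //; last exact: ex_int.
by rewrite /Rintegral G1.
Qed.


Definition ee := ex (- (1/4)) 1 0.
Definition cU : R := expR (- (- (1/4)) * 0 ^+ 2 / (1 + 2 * (- (1/4)) * 1 ^+ 2)) /
   Num.sqrt (1 + 2 * (- (1/4)) * 1 ^+ 2).
Lemma kU : 0 < 1 + 2 * (- (1/4)) * 1 ^+ 2 :> R.
Proof. rewrite expr1n mulr1; lra. Qed.

Lemma sum_upd k (c : nat -> R) (F : R -> R) (g : nat -> R) x :
  \sum_(i < k.+1) c i * F (if (i : nat) == k then x else g i) =
  c k * F x + \sum_(i < k) c i * F (g i).
Proof.
rewrite big_ord_recr /= eqxx addrC; congr (_ + _).
by apply: eq_bigr => i _; rewrite /= ltn_eqF.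
Qed.

Lemma GE_U k : forall al (c : nat -> R),
  gauss_expect k (fun g => al + \sum_(i < k) c i * ee (g i)) = al + cU * \sum_(i < k) c i.
Proof.
elim: k => [|k IH] al c /=; first by rewrite !big_ord0 mulr0.
have -> : (fun x : measurableTypeR R => gauss_expect k (fun g => al +
      \sum_(i < k.+1) c i * ee (if (i : nat) == k then x else g i))) =
    (fun x => gauss_expect k (fun g => (al + c k * ee x) + \sum_(i < k) c i * ee (g i))).
  by apply/funext => x; congr gauss_expect; apply/funext => g; rewrite sum_upd addrA.
have -> : (fun x : measurableTypeR R => gauss_expect k (fun g => (al + c k * ee x) + \sum_(i < k) c i * ee (g i))) =
    (fun x => (al + cU * \sum_(i < k) c i) + c k * ex (- (1/4)) 1 0 x).
  by apply/funext => x; rewrite IH /ee; ring.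
rewrite Rint_lin; last exact: kU.
rewrite -/cU big_ord_recr /=; ring.
Qed.


Lemma sum_upd_id k (c : nat -> R) (g : nat -> R) x :
  \sum_(i < k.+1) c i * (if (i : nat) == k then x else g i) =
  c k * x + \sum_(i < k) c i * g i.
Proof. exact: (sum_upd k c (fun y => y) g x). Qed.

Lemma GE_L k : forall al be lam b (a : nat -> R), 0 <= lam ->
  gauss_expect k (fun g => al + be * expR (- lam * (b + \sum_(i < k) a i * g i) ^+ 2)) =
  al + be * (expR (- lam * b ^+ 2 / (1 + 2 * lam * \sum_(i < k) a i ^+ 2)) /
     Num.sqrt (1 + 2 * lam * \sum_(i < k) a i ^+ 2)).
Proof.
elim: k => [|k IH] al be lam b a lam0 /=.
  by rewrite !big_ord0 addr0 mulr0 addr0 sqrtr1 !divr1.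
set S := \sum_(i < k) a i ^+ 2.
have S0 : 0 <= S by apply: sumr_ge0 => i _; exact: sqr_ge0.
set K := 1 + 2 * lam * S.
have K0 : 0 < K by rewrite /K; apply: (lt_le_trans ltr01); rewrite lerDl mulr_ge0 // mulr_ge0.
have K0' : K != 0 by rewrite gt_eqF.
have -> : (fun x : measurableTypeR R => gauss_expect k (fun g => al + be *
      expR (- lam * (b + \sum_(i < k.+1) a i * (if (i : nat) == k then x else g i)) ^+ 2))) =
    (fun x => al + (be / Num.sqrt K) * ex (lam / K) (a k) b x).
  apply/funext => x.
  have -> : (fun g : nat -> R => al + be * expR (- lam * (b + \sum_(i < k.+1) a i *
      (if (i : nat) == k then x else g i)) ^+ 2)) =
     (fun g : nat -> R => al + be * expR (- lam * ((b + a k * x) + \sum_(i < k) a i * g i) ^+ 2)).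
    by apply/funext => g; rewrite sum_upd_id addrA.
  rewrite IH // -/S -/K /ex; congr (_ + _).
  rewrite mulrA mulrAC; congr (_ * _); congr expR.
  by field.
set K' := 1 + 2 * (lam / K) * a k ^+ 2.
have K'0 : 0 < K'.
  rewrite /K'; apply: (lt_le_trans ltr01); rewrite lerDl mulr_ge0 ?sqr_ge0 //.
  by rewrite mulr_ge0 // divr_ge0 // ltW.
rewrite Rint_lin // -/K'.
have e1 : 1 + 2 * lam * \sum_(i < k.+1) a i ^+ 2 = K * K'.
  by rewrite big_ord_recr /= -/S /K' /K; field; rewrite -/K.
rewrite e1 sqrtrM ?ltW //; congr (_ + _).
have -> : - (lam / K) * b ^+ 2 / K' = - lam * b ^+ 2 / (K * K') by field; rewrite K0' gt_eqF.
have h1 : Num.sqrt K != 0 by rewrite gt_eqF // sqrtr_gt0.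
have h2 : Num.sqrt K' != 0 by rewrite gt_eqF // sqrtr_gt0.
by field; rewrite h1 h2.
Qed.


Lemma GE_ge0 k : forall f : (nat -> R) -> R, (forall g, 0 <= f g) -> 0 <= gauss_expect k f.
Proof.
elim: k => [|k IH] f f0 /=; first exact: f0.
by apply: Rintegral_ge0 => x _; apply: IH => g; exact: f0.
Qed.

Lemma lin_int al be lam a b : 0 < 1 + 2 * lam * a ^+ 2 ->
  N.-integrable setT (fun x => (al + be * ex lam a b x)%:E).
Proof.
move=> k0.
have H1 := finite_measure_integrable_cst N al measurableT.
have H2 := integrableZl measurableT be (ex_int b k0).
have := integrableD measurableT H1 H2.
apply: eq_integrable => // x _ /=.
Qed.

Lemma GE_mono k : forall (f h : (nat -> R) -> R) al (c : nat -> R), (forall i, 0 <= c i) ->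
  (forall g, 0 <= f g) -> (forall g, f g <= h g) ->
  (forall g, h g <= al + \sum_(i < k) c i * ee (g i)) ->
  gauss_expect k f <= gauss_expect k h.
Proof.
elim: k => [|k IH] f h al c c0 f0 fh hu /=; first exact: fh.
set pf := fun x : measurableTypeR R => gauss_expect k (fun g => f (fun i => if i == k then x else g i)).
set ph := fun x : measurableTypeR R => gauss_expect k (fun g => h (fun i => if i == k then x else g i)).
have Hfh x : pf x <= ph x.
  apply: (IH _ _ (al + c k * ee x) c c0) => g; first exact: f0.
    exact: fh.
  by rewrite -addrA -sum_upd; exact: hu.
have Hhu x : ph x <= (al + cU * \sum_(i < k) c i) + c k * ex (- (1/4)) 1 0 x.
  have -> : (al + cU * \sum_(i < k) c i) + c k * ex (- (1/4)) 1 0 x =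
     gauss_expect k (fun g => (al + c k * ee x) + \sum_(i < k) c i * ee (g i)).
    by rewrite GE_U /ee; ring.
  apply: (IH _ _ (al + c k * ee x) c c0) => g //.
  - by apply: le_trans (f0 _) (fh _).
  - by rewrite -addrA -sum_upd; exact: hu.
have pf0 x : 0 <= pf x by apply: GE_ge0 => g; exact: f0.
have ph0 x : 0 <= ph x by apply: le_trans (pf0 x) (Hfh x).
have Iu := lin_int (al + cU * \sum_(i < k) c i) (c k) 0 kU.
have Ifh : (\int[N]_x (pf x)%:E <= \int[N]_x (ph x)%:E)%E.
  by apply: int_mono_nn => x; rewrite lee_fin.
have Ihu : (\int[N]_x (ph x)%:E <= \int[N]_x ((al + cU * \sum_(i < k) c i) + c k * ex (- (1/4)) 1 0 x)%:E)%E.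
  by apply: int_mono_nn => x; rewrite lee_fin.
have fin := integrable_fin_num measurableT Iu.
have If0 : (0 <= \int[N]_x (pf x)%:E)%E by apply: integral_ge0 => x _; rewrite lee_fin.
have Ih0 : (0 <= \int[N]_x (ph x)%:E)%E by apply: integral_ge0 => x _; rewrite lee_fin.
rewrite /Rintegral; apply: fine_le => //.
- rewrite ge0_fin_numE //; apply: le_lt_trans Ifh _; apply: le_lt_trans Ihu _.
  by rewrite ltey_eq fin.
- rewrite ge0_fin_numE //; apply: le_lt_trans Ihu _.
  by rewrite ltey_eq fin.
Qed.


Lemma pw_lower (t y : R) : 0 < t ->
  t * (1 - expR (- (1 / (2 * t ^+ 2)) * (0 + y) ^+ 2)) <= `|y|.
Proof.
move=> t0; rewrite add0r.
set u := 1 / (2 * t ^+ 2) * y ^+ 2.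
have u0 : 0 <= u by rewrite /u mulr_ge0 ?sqr_ge0 // divr_ge0 // mulr_ge0 // sqr_ge0.
have e1 : 1 - u <= expR (- (1 / (2 * t ^+ 2)) * y ^+ 2).
  by rewrite mulNr; have := expR_ge1Dx (- u); rewrite /u.
have e2 : 0 <= expR (- (1 / (2 * t ^+ 2)) * y ^+ 2) := expR_ge0 _.
have [ty|yt] := leP t `|y|.
  apply: le_trans ty; nra.
apply: (@le_trans _ _ (t * u)); first nra.
have tu : t * u = `|y| ^+ 2 / (2 * t) by rewrite real_normK ?num_real // /u; field; rewrite gt_eqF.
rewrite tu ler_pdivrMr ?mulr_gt0 //.
have ay0 : 0 <= `|y| := normr_ge0 y.
nra.
Qed.


Lemma gauss_lower n (F : (nat -> R) -> R) (a : nat -> R) (w C : R) :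
  0 <= w -> 0 <= C -> 0 < \sum_(i < n) a i ^+ 2 ->
  (forall g : nat -> R, 0 <= F g) ->
  (forall g : nat -> R, F g <= \sum_(i < n) C * ee (g i)) ->
  (forall g : nat -> R, w * `|\sum_(i < n) a i * g i| <= F g) ->
  w * Num.sqrt (\sum_(i < n) a i ^+ 2) * (1 - 1 / Num.sqrt 2) <= gauss_expect n F.
Proof.
move=> w0 C0 S0 F0 FU FL.
set S := \sum_(i < n) a i ^+ 2 in S0 *.
set t := Num.sqrt S.
have t0 : 0 < t by rewrite sqrtr_gt0.
have t2 : t ^+ 2 = S by rewrite sqr_sqrtr // ltW.
pose L := fun g : nat -> R => w * t + (- (w * t)) *
   expR (- (1 / (2 * t ^+ 2)) * (0 + \sum_(i < n) a i * g i) ^+ 2).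
have HL : gauss_expect n L = w * t * (1 - 1 / Num.sqrt 2).
  rewrite /L GE_L; last by rewrite divr_ge0 // mulr_ge0 // sqr_ge0.
  rewrite -/S -t2 expr0n /= mulr0 mul0r expR0.
  have -> : 1 + 2 * (1 / (2 * t ^+ 2)) * t ^+ 2 = 2 by field; rewrite gt_eqF // exprn_gt0.
  ring.
have L0 g : 0 <= L g.
  rewrite /L; have e1 := expR_ge0 (- (1 / (2 * t ^+ 2)) * (0 + \sum_(i < n) a i * g i) ^+ 2).
  have e2 : expR (- (1 / (2 * t ^+ 2)) * (0 + \sum_(i < n) a i * g i) ^+ 2) <= 1.
    rewrite expR_le1 mulNr oppr_le0 mulr_ge0 ?sqr_ge0 // divr_ge0 // mulr_ge0 // sqr_ge0.
    done.
  have wt0 : 0 <= w * t by rewrite mulr_ge0 // ltW.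
  nra.
have LF g : L g <= F g.
  apply: le_trans (FL g); rewrite /L.
  have H := pw_lower (\sum_(i < n) a i * g i) t0.
  have -> : w * t + - (w * t) * expR (- (1 / (2 * t ^+ 2)) * (0 + \sum_(i < n) a i * g i) ^+ 2)
    = w * (t * (1 - expR (- (1 / (2 * t ^+ 2)) * (0 + \sum_(i < n) a i * g i) ^+ 2))) by ring.
  by rewrite ler_wpM2l.
rewrite -HL; apply: (GE_mono (al := 0) (c := fun _ => C)) => // g0.
by rewrite add0r; exact: FU.
Qed.

End gauss.

Section rad.
Context (R : realType).

Definition upd (g : nat -> R) k (x : R) := fun i : nat => if i == k then x else g i.

Fixpoint rexp (k : nat) (f : (nat -> R) -> R) : R :=
  match k with
  | 0 => f (fun _ => 0)
  | k.+1 => (rexp k (fun g => f (upd g k 1)) + rexp k (fun g => f (upd g k (-1)))) / 2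
  end.

Lemma rexp_mono k : forall f h : (nat -> R) -> R, (forall g, f g <= h g) -> rexp k f <= rexp k h.
Proof.
elim: k => [|k IH] f h fh /=; first exact: fh.
by rewrite ler_pM2r // lerD // IH.
Qed.

Lemma rsum_upd_id k (c : nat -> R) (g : nat -> R) x :
  \sum_(i < k.+1) c i * upd g k x i = c k * x + \sum_(i < k) c i * g i.
Proof.
rewrite big_ord_recr /= /upd eqxx addrC; congr (_ + _).
by apply: eq_bigr => i _; rewrite /= ltn_eqF.
Qed.

Lemma rexp_poly k : forall (c2 c4 b : R) (a : nat -> R), 0 <= c4 ->
  c2 * (b ^+ 2 + \sum_(i < k) a i ^+ 2) -
  c4 * (b ^+ 4 + 6 * b ^+ 2 * \sum_(i < k) a i ^+ 2 + 3 * (\sum_(i < k) a i ^+ 2) ^+ 2)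
  <= rexp k (fun g => c2 * (b + \sum_(i < k) a i * g i) ^+ 2 - c4 * (b + \sum_(i < k) a i * g i) ^+ 4).
Proof.
elim: k => [|k IH] c2 c4 b a c40 /=.
  by rewrite !big_ord0 !addr0 expr0n /= !mulr0 !addr0.
set S := \sum_(i < k) a i ^+ 2.
have H s : c2 * ((b + a k * s) ^+ 2 + S) - c4 * ((b + a k * s) ^+ 4 + 6 * (b + a k * s) ^+ 2 * S + 3 * S ^+ 2)
   <= rexp k (fun g => c2 * (b + \sum_(i < k.+1) a i * upd g k s i) ^+ 2 -
                       c4 * (b + \sum_(i < k.+1) a i * upd g k s i) ^+ 4).
  have -> : (fun g => c2 * (b + \sum_(i < k.+1) a i * upd g k s i) ^+ 2 -
                       c4 * (b + \sum_(i < k.+1) a i * upd g k s i) ^+ 4) =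
            (fun g => c2 * ((b + a k * s) + \sum_(i < k) a i * g i) ^+ 2 -
                       c4 * ((b + a k * s) + \sum_(i < k) a i * g i) ^+ 4).
    by apply/funext => g; rewrite rsum_upd_id !addrA.
  exact: IH.
have H1 := H 1; have H2 := H (-1).
rewrite big_ord_recr /= -/S.
apply: le_trans (_ : (_ + _) / 2 <= _); last first.
  by rewrite ler_pM2r // lerD.
have hS : 0 <= S by apply: sumr_ge0 => i _; exact: sqr_ge0.
have ha : 0 <= a k ^+ 4 by rewrite exprn_even_ge0.
set A := a k; set B := b.
have h4 : 0 <= c4 * A ^+ 4 by rewrite mulr_ge0.
rewrite /A /B in h4 *.
lra.
Qed.


Definition sgnb (b : bool) : R := if b then 1 else -1.
Definition ext n (b : {ffun 'I_n -> bool}) : nat -> R :=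
  fun i => if @insub _ (fun k => (k < n)%N) 'I_n i is Some j then sgnb (b j) else 0.

Definition phi n (p : bool * {ffun 'I_n -> bool}) : {ffun 'I_n.+1 -> bool} :=
  [ffun i => if unlift ord_max i is Some j then p.2 j else p.1].
Definition psi n (b : {ffun 'I_n.+1 -> bool}) : bool * {ffun 'I_n -> bool} :=
  (b ord_max, [ffun j => b (lift ord_max j)]).

Lemma phiK n : cancel (@phi n) (@psi n).
Proof.
case=> s b'; rewrite /psi /phi /= ffunE unlift_none; congr pair.
by apply/ffunP => j; rewrite !ffunE liftK.
Qed.
Lemma psiK n : cancel (@psi n) (@phi n).
Proof.
move=> b; apply/ffunP => i; rewrite /psi /phi ffunE /=.
by case: unliftP => [j ->|->]; rewrite ?ffunE.
Qed.

Lemma ext_phi n s (b' : {ffun 'I_n -> bool}) : ext (phi (s, b')) = upd (ext b') n (sgnb s).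
Proof.
apply/funext => i; rewrite /ext /upd.
case: (ltngtP i n) => [lt|gt|->].
- have lt' : (i < n.+1)%N by apply: ltnW.
  rewrite (insubT (fun k => (k < n.+1)%N) lt') (insubT (fun k => (k < n)%N) lt) ffunE.
  have -> : Sub i lt' = lift ord_max (Sub i lt : 'I_n).
    by apply: val_inj; rewrite /= /bump leqNgt lt.
  by rewrite liftK.
- rewrite !insubF //; apply/negbTE; rewrite -leqNgt //; exact: ltnW.
- rewrite (insubT (fun k => (k < n.+1)%N) (ltnSn n)) ffunE.
  have -> : Sub n (ltnSn n) = @ord_max n by apply: val_inj.
  by rewrite unlift_none.
Qed.

Lemma bridge n : forall (H : (nat -> R) -> R),
  (2 ^+ n)^-1 * \sum_(b : {ffun 'I_n -> bool}) H (ext b) = rexp n H.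
Proof.
elim: n => [|n IH] H /=.
  rewrite expr0 invr1 mul1r.
  have e (b : {ffun 'I_0 -> bool}) : ext b = fun _ => 0.
    by apply/funext => i; rewrite /ext insubF.
  rewrite (eq_bigr (fun _ => H (fun _ => 0))) => [|b _]; last by rewrite e.
  by rewrite sumr_const card_ffun card_ord card_bool expn0 mulr1n.
rewrite -!IH.
rewrite (reindex (@phi n)) /=; last first.
  by apply: onW_bij; exists (@psi n); [exact: phiK|exact: psiK].
rewrite -(pair_big xpredT xpredT (fun s b' => H (ext (phi (s, b'))))) /=.
rewrite big_bool /=.
under eq_bigr do rewrite ext_phi.
under [X in _ + X]eq_bigr do rewrite ext_phi.
rewrite exprS invfM; field.
by rewrite expf_neq0.
Qed.


Lemma pw_poly (t y : R) : 0 < t -> 3 / (4 * t) * y ^+ 2 - 1 / (16 * t ^+ 3) * y ^+ 4 <= `|y|.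
Proof.
move=> t0; set v := `|y|.
have v0 : 0 <= v := normr_ge0 y.
have y2 : y ^+ 2 = v ^+ 2 by rewrite /v real_normK // num_real.
have y4 : y ^+ 4 = v ^+ 4 by rewrite (_ : 4 = 2 * 2)%N // !exprM y2.
rewrite y2 y4.
have key : 0 <= v * ((v - 2 * t) ^+ 2 * (v + 4 * t)).
  by rewrite mulr_ge0 // mulr_ge0 ?sqr_ge0 // addr_ge0 // mulr_ge0 // ltW.
have t3 : 0 < 16 * t ^+ 3 by rewrite mulr_gt0 // exprn_gt0.
rewrite -subr_ge0.
have -> : v - (3 / (4 * t) * v ^+ 2 - 1 / (16 * t ^+ 3) * v ^+ 4) =
   (v * ((v - 2 * t) ^+ 2 * (v + 4 * t))) / (16 * t ^+ 3).
  by field; rewrite gt_eqF.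
by rewrite divr_ge0 // ltW.
Qed.

Lemma rad_lower n (F : (nat -> R) -> R) (a : nat -> R) (w : R) :
  0 <= w -> 0 < \sum_(i < n) a i ^+ 2 ->
  (forall g : nat -> R, w * `|\sum_(i < n) a i * g i| <= F g) ->
  w * Num.sqrt (\sum_(i < n) a i ^+ 2) * (9 / 16) <= rexp n F.
Proof.
move=> w0 S0 FL.
set S := \sum_(i < n) a i ^+ 2 in S0 *.
set t := Num.sqrt S.
have t0 : 0 < t by rewrite sqrtr_gt0.
have t2 : S = t ^+ 2 by rewrite sqr_sqrtr // ltW.
have c40 : 0 <= w * (1 / (16 * t ^+ 3)) by rewrite mulr_ge0 // divr_ge0 // mulr_ge0 // ltW // exprn_gt0.
have L1 : rexp n (fun g => w * (3 / (4 * t)) * (0 + \sum_(i < n) a i * g i) ^+ 2 -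
    w * (1 / (16 * t ^+ 3)) * (0 + \sum_(i < n) a i * g i) ^+ 4) <= rexp n F.
  apply: rexp_mono => g; apply: le_trans (FL g).
  have H := pw_poly (\sum_(i < n) a i * g i) t0.
  have H2 := ler_wpM2l w0 H.
  apply: le_trans H2; rewrite add0r.
  by rewrite le_eqVlt; apply/orP; left; apply/eqP; ring.
have L2 := rexp_poly n (w * (3 / (4 * t))) 0 a c40.
apply: le_trans L1; apply: le_trans L2.
rewrite -/S expr0n /= t2.
rewrite le_eqVlt; apply/orP; left; apply/eqP; field.
by rewrite gt_eqF.
Qed.

End rad.

Section geo.
Context (R : realType).

Lemma enorm_ge0 d (v : 'rV[R]_d) : 0 <= enorm v.
Proof. exact: sqrtr_ge0. Qed.

Lemma enorm_sq d (v : 'rV[R]_d) : enorm v ^+ 2 = \sum_(i < d) (v ord0 i) ^+ 2.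
Proof. by rewrite /enorm sqr_sqrtr // sumr_ge0 // => i _; exact: sqr_ge0. Qed.

Lemma enorm_coord d (v : 'rV[R]_d) j : `|v ord0 j| <= enorm v.
Proof.
rewrite /enorm -sqrtr_sqr ler_wsqrtr //.
rewrite (bigD1 j) //= lerDl sumr_ge0 // => i _; exact: sqr_ge0.
Qed.

Lemma enorm_sub_le2 d (v w : 'rV[R]_d) : enorm v <= 1 -> enorm w <= 1 -> enorm (v - w) <= 2.
Proof.
move=> hv hw.
have h1 : enorm (v - w) ^+ 2 <= 2 * enorm v ^+ 2 + 2 * enorm w ^+ 2.
  rewrite !enorm_sq !mulr_sumr -big_split /=; apply: ler_sum => i _.
  rewrite !mxE; have := sqr_ge0 (v ord0 i + w ord0 i); nra.
have := enorm_ge0 (v - w); have := enorm_ge0 v; have := enorm_ge0 w.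
nra.
Qed.

Lemma sum_const_seq (T : Type) (s : seq T) (c : R) : \sum_(p <- s) c = c *+ size s.
Proof. by elim: s => [|x s IH]; rewrite ?big_nil ?big_cons ?IH ?mulrS. Qed.

Lemma sum_cover_undup (T : eqType) (s : seq T) (f : T -> R) : (forall i, 0 <= f i) ->
  \sum_(i <- undup s) f i <= \sum_(i <- s) f i.
Proof.
move=> f0; elim: s => [|x s IH] //=.
case: ifP => xs; rewrite big_cons.
  by apply: le_trans IH _; rewrite lerDr.
by rewrite big_cons lerD2l.
Qed.

Lemma sum_cover m (f : 'I_m -> R) (s : seq 'I_m) : (forall i, 0 <= f i) ->
  (forall i, i \in s) -> \sum_i f i <= \sum_(i <- s) f i.
Proof.
move=> f0 ins; apply: le_trans (sum_cover_undup s f0).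
rewrite le_eqVlt; apply/orP; left; apply/eqP.
rewrite -big_enum /=; apply: perm_big; apply: uniq_perm.
- exact: enum_uniq.
- exact: undup_uniq.
- by move=> i; rewrite mem_enum mem_undup ins.
Qed.

Lemma cover_path m1 m2 (x : 'I_m1 * 'I_m2) T : path (@trav_step m1 m2) x T ->
  forall i : 'I_m1, (x.1 <= i <= (last x T).1)%N -> i \in map fst (x :: T).
Proof.
elim: T x => [|y T IH] x /=.
  move=> _ i /andP[h1 h2]; rewrite inE.
  by apply/eqP; apply: val_inj; apply/eqP; rewrite eqn_leq h1 h2.
move=> /andP[st pt] i /andP[h1 h2].
have hy : (val y.1 <= (val x.1).+1)%N.
  by move: st; rewrite /trav_step => /or3P[/andP[/eqP-> _]|/andP[/eqP-> _]|/andP[/eqP-> _]].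
case: (eqVneq i x.1) => [->|ne]; first by rewrite inE eqxx.
rewrite inE; apply/orP; right.
apply: IH => //; rewrite h2 andbT.
apply: leq_trans hy _; rewrite ltn_neqAle h1 andbT eq_sym.
exact: ne.
Qed.


Lemma trav_cover m1 m2 (x : 'I_m1 * 'I_m2) T (f : 'I_m1 -> R) :
  is_traversal x T -> (forall i, 0 <= f i) -> \sum_i f i <= \sum_(p <- x :: T) f p.1.
Proof.
move=> /and5P[h1 _ pt hl _] f0.
rewrite -(big_map fst xpredT f); apply: sum_cover => // i.
apply: (cover_path pt); rewrite (eqP h1) /= (eqP hl).
by rewrite -ltnS prednK // (leq_ltn_trans _ (ltn_ord i)).
Qed.

Lemma last_iota j k : last j (iota j.+1 k) = (j + k)%N.
Proof. by elim: k j => [|k IH] j /=; rewrite ?addn0 // IH addSnnS. Qed.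

Lemma diag_exists m : (0 < m)%N ->
  exists x (T : seq ('I_m * 'I_m)), is_traversal x T /\ size (x :: T) = m.
Proof.
case: m => // m' _.
pose f := fun i : nat => ((inord i : 'I_m'.+1), (inord i : 'I_m'.+1)).
exists (f 0%N), (map f (iota 1 m')); split; last by rewrite /= size_map size_iota.
have hp : forall k j, (j + k <= m')%N -> path (@trav_step m'.+1 m'.+1) (f j) (map f (iota j.+1 k)).
  elim=> [|k IH] j hjk //=.
  rewrite IH ?addSnnS // andbT /trav_step /f /=.
  have h1 : (j < m'.+1)%N by rewrite ltnS (leq_trans _ hjk) // leq_addr.
  have h2 : (j.+1 < m'.+1)%N by rewrite ltnS (leq_trans _ hjk) // addnS ltnS leq_addr.
  by rewrite !inordK // eqxx !orbT.
apply/and5P; split.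
- by rewrite /f /= inordK.
- by rewrite /f /= inordK.
- exact: hp.
- by rewrite last_map last_iota /f /= inordK.
- by rewrite last_map last_iota /f /= inordK.
Qed.

Lemma dtw_set_ge0 d m1 m2 (s : curve R d m1) (t : curve R d m2) c :
  [set c | exists x (T : seq ('I_m1 * 'I_m2)),
         is_traversal x T /\ c = \sum_(p <- x :: T) enorm (s p.1 - t p.2)] c -> 0 <= c.
Proof. by move=> [x [T [_ ->]]]; apply: sumr_ge0 => p _; exact: enorm_ge0. Qed.

Lemma dtw_ge0 d m (s t : curve R d m) : (0 < m)%N -> 0 <= dtw s t.
Proof.
move=> m0; apply: lb_le_inf.
  have [x [T [Ht _]]] := diag_exists m0.
  by exists (\sum_(p <- x :: T) enorm (s p.1 - t p.2)), x, T.
by move=> c /dtw_set_ge0.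
Qed.

Lemma dtw_const_ge d m (s : curve R d m) w : (0 < m)%N ->
  \sum_k enorm (s k - w) <= dtw s (fun _ : 'I_m => w).
Proof.
move=> m0; apply: lb_le_inf.
  have [x [T [Ht _]]] := diag_exists m0.
  by exists (\sum_(p <- x :: T) enorm (s p.1 - w)), x, T.
move=> c [x [T [Ht ->]]].
by apply: (trav_cover (f := fun k => enorm (s k - w))) => // i; exact: enorm_ge0.
Qed.

Lemma dtw_le2 d m (s t : curve R d m) : (0 < m)%N -> in_unit_ball s -> in_unit_ball t ->
  dtw s t <= 2 * m%:R.
Proof.
move=> m0 hs ht.
have [x [T [Ht hsz]]] := diag_exists m0.
apply: le_trans (_ : \sum_(p <- x :: T) enorm (s p.1 - t p.2) <= _).
  apply: ge_inf; last by exists x, T.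
  by exists 0 => c /dtw_set_ge0.
apply: le_trans (_ : \sum_(p <- x :: T) (2 : R) <= _).
  by apply: ler_sum => p _; apply: enorm_sub_le2.
by rewrite sum_const_seq hsz mulr_natr.
Qed.

End geo.

Section main.
Context (R : realType).
Variables (d m n : nat) (P : 'I_n -> curve R d m).
Hypothesis m0 : (0 < m)%N.
Hypothesis Pin : forall i, in_unit_ball (P i).

Definition sdset (r : 'I_n -> R) := [set (`| (n%:R)^-1 * \sum_(i < n) dtw (P i) psi * r i |)
        | psi in [set psi : curve R d m | in_unit_ball psi]].

Lemma zero_in_ball : in_unit_ball (fun _ : 'I_m => (0 : 'rV[R]_d)).
Proof.
move=> k; rewrite /enorm big1 ?sqrtr0 // => i _; by rewrite mxE expr0n.
Qed.

Lemma sd_ub r (psi : curve R d m) : in_unit_ball psi ->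
  `| (n%:R)^-1 * \sum_(i < n) dtw (P i) psi * r i | <= (n%:R)^-1 * \sum_(i < n) (2 * m%:R) * `|r i|.
Proof.
move=> hpsi; rewrite normrM ger0_norm ?invr_ge0 // ler_wpM2l ?invr_ge0 //.
apply: le_trans (ler_norm_sum _ _ _) _; apply: ler_sum => i _.
rewrite normrM ger0_norm ?dtw_ge0 // ler_wpM2r //; exact: dtw_le2.
Qed.

Lemma sdset_ne r : sdset r !=set0.
Proof. by exists (`| (n%:R)^-1 * \sum_(i < n) dtw (P i) (fun _ : 'I_m => 0) * r i |), (fun _ : 'I_m => 0) => //; exact: zero_in_ball. Qed.

Lemma sd_ge r (psi : curve R d m) : in_unit_ball psi ->
  `| (n%:R)^-1 * \sum_(i < n) dtw (P i) psi * r i | <= sup_dev P r.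
Proof.
move=> hpsi; apply: ub_le_sup; last by exists psi.
exists ((n%:R)^-1 * \sum_(i < n) (2 * m%:R) * `|r i|) => _ [p hp <-].
exact: sd_ub.
Qed.

Lemma sd_le r : sup_dev P r <= (n%:R)^-1 * \sum_(i < n) (2 * m%:R) * `|r i|.
Proof.
apply: ge_sup; first exact: sdset_ne.
by move=> _ [p hp <-]; exact: sd_ub.
Qed.

Lemma sd_ge0 r : 0 <= sup_dev P r.
Proof. exact: le_trans (normr_ge0 _) (sd_ge r zero_in_ball). Qed.

End main.

Section pick.
Context (R : realType).

Lemma two_le (x : R) : 2 <= `|x - 1| + `|x - -1|.
Proof.
have H := ler_normD (x - -1) (-(x - 1)).
rewrite normrN (_ : x - -1 + - (x - 1) = 2) in H; last by ring.
rewrite ger0_norm in H; last by lra.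
by rewrite addrC.
Qed.

Lemma pick_psi d' m n (P : 'I_n -> curve R d'.+1 m) : (0 < m)%N ->
  (forall i, in_unit_ball (P i)) ->
  exists psi : curve R d'.+1 m, in_unit_ball psi /\ m%:R * n%:R <= \sum_i dtw (P i) psi.
Proof.
move=> m0 Pin.
pose e : 'rV[R]_d'.+1 := \row_(j < d'.+1) (if j == ord0 then 1 else 0).
have hsq : \sum_(j < d'.+1) (e ord0 j) ^+ 2 = 1.
  rewrite (bigD1 ord0) //= big1 ?addr0; first by rewrite mxE eqxx expr1n.
  by move=> j /negPf hj; rewrite mxE hj expr0n.
have he : enorm e <= 1 by rewrite /enorm hsq sqrtr1.
have hme : enorm (- e) <= 1.
  rewrite /enorm (eq_bigr (fun j => (e ord0 j) ^+ 2)) ?hsq ?sqrtr1 // => j _.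
  by rewrite mxE sqrrN.
pose pp := fun _ : 'I_m => e.
pose pm := fun _ : 'I_m => - e.
have hpp : in_unit_ball pp by move=> k.
have hpm : in_unit_ball pm by move=> k.
have AB : \sum_(i < n) (m%:R * 2) <= \sum_(i < n) (dtw (P i) pp + dtw (P i) pm).
  apply: ler_sum => i _.
  apply: le_trans (lerD (dtw_const_ge (P i) e m0) (dtw_const_ge (P i) (- e) m0)).
  rewrite -big_split /=.
  apply: le_trans (_ : \sum_(k < m) (2 : R) <= _).
    by rewrite sumr_const card_ord mulr_natl.
  apply: ler_sum => k _.
  have h1 := enorm_coord (P i k - e) ord0.
  have h2 := enorm_coord (P i k - - e) ord0.
  rewrite !mxE eqxx in h1 h2.
  apply: le_trans (two_le (P i k ord0 ord0)) _.
  exact: lerD.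
rewrite big_split /= sumr_const card_ord in AB.
case: (lerP (m%:R * n%:R) (\sum_i dtw (P i) pp)) => h.
  by exists pp.
exists pm; split => //.
move: AB; rewrite -mulr_natr; lra.
Qed.

End pick.

Lemma ee_ge (R : realType) (x : R) : `|x| <= ee x.
Proof.
rewrite /ee /ex add0r mul1r opprK.
apply: le_trans (expR_ge1Dx _).
have hx : x ^+ 2 = `|x| ^+ 2 by rewrite real_normK // num_real.
rewrite mul1r hx; have := sqr_ge0 (`|x| - 2); nra.
Qed.

Lemma key_ineq (R : realType) (m n : nat) (S kap : R) : (0 < n)%N ->
  m%:R ^+ 2 * n%:R <= S -> 1/4 <= kap ->
  1/4 * Num.sqrt (m%:R ^+ 2 / n%:R) <= (n%:R)^-1 * Num.sqrt S * kap.
Proof.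
move=> n0 hS hk.
have nn : (n%:R : R) != 0 by rewrite pnatr_eq0 -lt0n.
have e1 : (m%:R ^+ 2 / n%:R : R) = ((n%:R)^-1) ^+ 2 * (m%:R ^+ 2 * n%:R) by field.
rewrite e1 sqrtrM ?sqr_ge0 // sqrtr_sqr ger0_norm ?invr_ge0 //.
have hX := ler_wsqrtr hS.
have X0 := sqrtr_ge0 (m%:R ^+ 2 * n%:R : R).
have u0 : 0 <= (n%:R : R)^-1 by rewrite invr_ge0.
set X := Num.sqrt _ in hX X0 *; set Y := Num.sqrt S in hX *; set u := (n%:R)^-1 in u0 *.
have h1 : 0 <= u * (Y - X) by rewrite mulr_ge0 // subr_ge0.
have h2 : 0 <= u * Y * (kap - 1/4) by rewrite mulr_ge0 ?subr_ge0 // mulr_ge0 // (le_trans X0).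
nra.
Qed.

Lemma sqrt2_bound (R : realType) : 1/4 <= 1 - 1 / Num.sqrt (2 : R).
Proof.
set s := Num.sqrt (2 : R).
have s2 : s ^+ 2 = 2 by rewrite sqr_sqrtr.
have s0 : 0 <= s := sqrtr_ge0 _.
have hs : 4/3 <= s by nra.
have sp : 0 < s by lra.
have -> : 1 - 1 / s = (s - 1) / s by field; rewrite gt_eqF.
rewrite ler_pdivlMr //; lra.
Qed.


End Aux.
Import Aux.

Theorem proposition4p2 (R : realType) :
  exists c : R, 0 < c /\
    forall (d m n : nat), (0 < d)%N -> (0 < m)%N -> (0 < n)%N ->
    forall P : 'I_n -> curve R d m, (forall i, in_unit_ball (P i)) ->
      c * Num.sqrt ((m%:R) ^+ 2 / n%:R) <= rademacher P /\
      c * Num.sqrt ((m%:R) ^+ 2 / n%:R) <= gaussian P.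
Proof.
exists (1/4); split; first lra.
move=> [//|d'] m n _ m0 n0 P Pin.
have [psi [hpsi hsum]] := pick_psi m0 Pin.
pose a := fun k : nat => if @insub _ (fun k => (k < n)%N) 'I_n k is Some i then dtw (P i) psi else 0.
have ha (i : 'I_n) : a i = dtw (P i) psi by rewrite /a valK.
have hS : m%:R ^+ 2 * n%:R <= \sum_(i < n) a i ^+ 2.
  rewrite (eq_bigr (fun i : 'I_n => dtw (P i) psi ^+ 2)); last by move=> i _; rewrite ha.
  apply: le_trans (_ : \sum_(i < n) (2 * m%:R * dtw (P i) psi - m%:R ^+ 2) <= _); last first.
    apply: ler_sum => i _; have := sqr_ge0 (dtw (P i) psi - m%:R); lra.
  rewrite sumrB -mulr_sumr sumr_const card_ord.
  have hm : (0 : R) <= m%:R by [].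
  have hs' : 0 <= \sum_i dtw (P i) psi - m%:R * n%:R by rewrite subr_ge0.
  have := mulr_ge0 hm hs'.
  rewrite -mulr_natr; nra.
have S0 : 0 < \sum_(i < n) a i ^+ 2.
  by apply: lt_le_trans hS; apply: mulr_gt0; [apply: exprn_gt0|]; rewrite ltr0n.
have hL (g : nat -> R) : (n%:R)^-1 * `|\sum_(i < n) a i * g i| <= sup_dev P (fun i => g i).
  apply: le_trans (sd_ge m0 Pin (fun i => g i) hpsi).
  rewrite normrM ger0_norm ?invr_ge0 //.
  by rewrite (eq_bigr (fun i : 'I_n => dtw (P i) psi * g i)) // => i _; rewrite ha.
split.
- have -> : rademacher P = rexp n (fun g => sup_dev P (fun i : 'I_n => g i)).
    rewrite -bridge /rademacher; congr (_ * _); apply: eq_bigr => b _.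
    by congr sup_dev; apply/funext => i; rewrite /ext valK.
  have hk : (1/4 : R) <= 9/16 by lra.
  have w0 : (0 : R) <= (n%:R)^-1 by rewrite invr_ge0.
  exact: le_trans (key_ineq n0 hS hk) (rad_lower w0 S0 hL).
- rewrite /gaussian.
  have F0 (g : nat -> R) : 0 <= sup_dev P (fun i => g i) by exact: sd_ge0.
  have FU (g : nat -> R) : sup_dev P (fun i => g i) <= \sum_(i < n) ((n%:R)^-1 * (2 * m%:R)) * ee (g i).
    apply: le_trans (sd_le m0 Pin _) _.
    rewrite mulr_sumr; apply: ler_sum => i _.
    rewrite [X in X <= _]mulrA; apply: ler_wpM2l; [by rewrite mulr_ge0 // invr_ge0|exact: ee_ge].
  have w0 : (0 : R) <= (n%:R)^-1 by rewrite invr_ge0.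
  have C0 : (0 : R) <= (n%:R)^-1 * (2 * m%:R) by rewrite mulr_ge0.
  exact: le_trans (key_ineq n0 hS (sqrt2_bound R)) (gauss_lower w0 C0 S0 F0 FU hL).
Qed.
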